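(* Let $m\ge0$ and $k\ge1$ be integers and $n\ge0$. Then $$\lim_{q\to1}\frac{\sum_{j=0}^{2n}(-1)^jq^{mj}\begin{bmatrix} 2n\\ j\end{bmatrix}_{q^k}}{(q;q^2)_n}=k^n,\qquad \lim_{q\to1}\frac{\sum_{j=0}^{2n+1}(-1)^jq^{mj}\begin{bmatrix} 2n+1\\ j\end{bmatrix}_{q^k}}{(q;q^2)_{n+1}}=mk^n.$$
   Context: $(x;q)_n=\prod_{j=0}^{n-1}(1-q^jx)$. The Gaussian binomial coefficient is $\begin{bmatrix} n\\ j\end{bmatrix}_q=\frac{(q;q)_n}{(q;q)_j(q;q)_{n-j}}$ for $0\le j\le n$, a polynomial in $q$; $\begin{bmatrix} n\\ j\end{bmatrix}_{q^k}$ is this with $q$ replaced by $q^k$. The quotients are rational functions of $q$ and the limits are taken as $q\to1$. *)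

(* Defs.v *)
From Stdlib Require Import Reals.
Open Scope R_scope.

Fixpoint qpoch (x q : R) (n : nat) : R :=
  match n with
  | O => 1
  | S n' => qpoch x q n' * (1 - q ^ n' * x)
  end.

(* Gaussian binomial [n choose j]_q = (q;q)_n / ((q;q)_j (q;q)_{n-j}),
   as a function of q (agrees with the polynomial for q not a root of unity). *)
Definition qbinom (q : R) (n j : nat) : R :=
  qpoch q q n / (qpoch q q j * qpoch q q (n - j)).

Definition altsum (m k N : nat) (q : R) : R :=
  sum_f_R0 (fun j => (-1) ^ j * q ^ (m * j) * qbinom (q ^ k) N j) N.

(* Main.v *)
Require Import Defs.
From Stdlib Require Import Reals Lra Lia.
Open Scope R_scope.

Lemma pow_ne1 (x : R) (i : nat) : 0 < x -> x <> 1 -> (1 <= i)%nat -> x ^ i <> 1.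
Proof.
  intros H0 H1 Hi.
  destruct (Rlt_or_le x 1) as [Hl|Hl].
  - assert (0 <= x ^ i < 1) by (apply pow_lt_1_compat; [lra|lia]). lra.
  - assert (1 < x ^ i) by (apply Rlt_pow_R1; [lra|lia]). lra.
Qed.

Lemma fac_ne0 (p : R) (i : nat) : 0 < p -> p <> 1 -> 1 - p ^ i * p <> 0.
Proof.
  intros H0 H1.
  pose proof (pow_ne1 p (S i) H0 H1 ltac:(lia)). simpl in H. rewrite Rmult_comm. lra.
Qed.

Lemma qpoch_ne0 (p : R) (i : nat) : 0 < p -> p <> 1 -> qpoch p p i <> 0.
Proof.
  intros H0 H1. induction i; simpl. lra.
  apply Rmult_integral_contrapositive_currified; auto. apply fac_ne0; auto.
Qed.

Definition cc (p : R) (N j : nat) : R := if (j <=? N)%nat then qbinom p N j else 0.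

Lemma qbinom_diag p N : 0 < p -> p <> 1 -> qbinom p N N = 1.
Proof. intros. unfold qbinom. rewrite Nat.sub_diag. simpl. field. apply qpoch_ne0; auto. Qed.
Lemma qbinom_0 p N : 0 < p -> p <> 1 -> qbinom p N 0 = 1.
Proof. intros. unfold qbinom. rewrite Nat.sub_0_r. simpl. field. apply qpoch_ne0; auto. Qed.

Lemma cc_gt p N j : (N < j)%nat -> cc p N j = 0.
Proof. intros. unfold cc. destruct (Nat.leb_spec j N); [lia|auto]. Qed.
Lemma cc_le p N j : (j <= N)%nat -> cc p N j = qbinom p N j.
Proof. intros. unfold cc. destruct (Nat.leb_spec j N); [auto|lia]. Qed.

Lemma cc_P12 p N j : 0 < p -> p <> 1 ->
  cc p (S N) (S j) = p ^ (S j) * cc p N (S j) + cc p N j /\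
  p ^ j * cc p (S N) (S j) = p ^ j * cc p N (S j) + p ^ N * cc p N j.
Proof.
  intros H0 H1.
  destruct (Compare_dec.lt_eq_lt_dec j N) as [[Hlt|Heq]|Hgt].
  - rewrite !cc_le by lia.
    destruct (Nat.le_exists_sub (S j) N ltac:(lia)) as [r [Hr _]].
    replace N with (j + S r)%nat by lia. clear Hr Hlt.
    unfold qbinom.
    replace (S (j + S r) - S j)%nat with (S r) by lia.
    replace (j + S r - S j)%nat with r by lia.
    replace (j + S r - j)%nat with (S r) by lia.
    simpl qpoch.
    pose proof (qpoch_ne0 p j H0 H1). pose proof (qpoch_ne0 p r H0 H1).
    pose proof (fac_ne0 p j H0 H1). pose proof (fac_ne0 p r H0 H1).
    rewrite !pow_add. simpl. split; field; repeat split; auto.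
  - subst. rewrite (cc_gt p N (S N)) by lia. rewrite !cc_le by lia. rewrite !qbinom_diag by auto.
    rewrite <- tech_pow_Rmult. split; ring.
  - rewrite !cc_gt by lia. split; ring.
Qed.

Definition F (p : R) (N : nat) (z : R) (M : nat) : R :=
  sum_f_R0 (fun j => (-1) ^ j * z ^ j * cc p N j) M.

Lemma F_ext p N z M : (N <= M)%nat -> F p N z M = F p N z N.
Proof.
  intros H. induction M.
  - replace N with 0%nat by lia. reflexivity.
  - destruct (Nat.eq_dec N (S M)) as [->|Hn]; [reflexivity|].
    unfold F in *. simpl. rewrite IHM by lia. rewrite cc_gt by lia. ring.
Qed.

Lemma cc0 p N : 0 < p -> p <> 1 -> cc p N 0 = 1.
Proof. intros. rewrite cc_le by lia. apply qbinom_0; auto. Qed.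

Lemma FA p N z M : 0 < p -> p <> 1 ->
  F p (S N) z (S M) = F p N (p * z) (S M) - z * F p N z M.
Proof.
  intros H0 H1. unfold F. do 2 rewrite (decomp_sum _ (S M)) by lia. simpl Nat.pred.
  rewrite !cc0 by auto.
  transitivity (1 + (sum_f_R0 (fun i => (-1) ^ S i * (p * z) ^ S i * cc p N (S i)) M
     + sum_f_R0 (fun i => ((-1) ^ i * z ^ i * cc p N i) * (- z)) M)).
  - rewrite <- plus_sum. simpl (_ ^ 0). rewrite Rmult_1_l, Rmult_1_l. f_equal.
    apply sum_eq. intros i _. destruct (cc_P12 p N i H0 H1) as [E _]. rewrite E.
    simpl. rewrite Rpow_mult_distr. ring.
  - rewrite <- scal_sum. simpl (_ ^ 0). ring.
Qed.

Lemma FB p N z M : 0 < p -> p <> 1 ->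
  F p (S N) (p * z) (S M) = F p N (p * z) (S M) - p ^ (S N) * z * F p N z M.
Proof.
  intros H0 H1. unfold F. do 2 rewrite (decomp_sum _ (S M)) by lia. simpl Nat.pred.
  rewrite !cc0 by auto.
  transitivity (1 + (sum_f_R0 (fun i => (-1) ^ S i * (p * z) ^ S i * cc p N (S i)) M
     + sum_f_R0 (fun i => ((-1) ^ i * z ^ i * cc p N i) * (- (p ^ S N * z))) M)).
  - rewrite <- plus_sum. simpl (_ ^ 0). rewrite Rmult_1_l, Rmult_1_l. f_equal.
    apply sum_eq. intros i _. destruct (cc_P12 p N i H0 H1) as [_ E].
    transitivity ((-1) ^ S i * p * z * z ^ i * (p ^ i * cc p (S N) (S i))).
    { simpl. rewrite Rpow_mult_distr. ring. }
    rewrite E. simpl. rewrite Rpow_mult_distr. ring.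
  - rewrite <- scal_sum. simpl (_ ^ 0). ring.
Qed.

Definition SS p N z := F p N z N.

Lemma SS_rec p N z : 0 < p -> p <> 1 ->
  SS p (S (S N)) z = (1 - z) * SS p (S N) z + z * (1 - p ^ (S N)) * SS p N z.
Proof.
  intros H0 H1. unfold SS.
  rewrite FA by auto. rewrite FB by auto. rewrite (FA p N z N) by auto.
  rewrite (F_ext p N (p*z) (S (S N))) by lia.
  rewrite (F_ext p N (p*z) (S N)) by lia.
  rewrite (F_ext p N z (S N)) by lia. ring.
Qed.

Fixpoint g (n : nat) (q : R) : R :=
  match n with O => 0 | S n' => 1 + q * g n' q end.

Lemma g_geom n q : (1 - q) * g n q = 1 - q ^ n.
Proof. induction n; simpl. ring. replace ((1-q)*(1+q*g n q)) with (1 - q + q*((1-q)*g n q)) by ring.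
  rewrite IHn. ring. Qed.

Lemma g_one n : g n 1 = INR n.
Proof. induction n; simpl g. reflexivity. rewrite IHn, S_INR. ring. Qed.

Lemma g_pos n q : 0 < q -> 0 <= g n q.
Proof. intros. induction n; simpl. lra. assert (0 <= q * g n q) by (apply Rmult_le_pos; lra). lra. Qed.

Lemma g_posS n q : 0 < q -> 0 < g (S n) q.
Proof. intros. simpl. assert (0 <= q * g n q) by (apply Rmult_le_pos; [lra|apply g_pos;auto]). lra. Qed.

Lemma g_cont n x : continuity_pt (g n) x.
Proof.
  induction n; simpl g.
  - apply continuity_pt_const. intros a b. reflexivity.
  - apply (continuity_pt_plus (fun _ => 1) (fun q => q * g n q)).
    + apply continuity_pt_const. intros a b. reflexivity.
    + apply (continuity_pt_mult (fun q => q) (g n)); auto.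
      apply derivable_continuous_pt. apply derivable_pt_id.
Qed.

Lemma pow_cont n x : continuity_pt (fun q => q ^ n) x.
Proof. apply derivable_continuous_pt. apply derivable_pt_pow. Qed.

Fixpoint PE (m k n : nat) (q : R) : R * R :=
  match n with
  | O => (1, g m q)
  | S n' =>
    let a := fst (PE m k n' q) in
    let b := snd (PE m k n' q) in
    let c := (1 - q ^ m) * b + q ^ m * g (k * (2 * n' + 1)) q * a in
    (c, g m q * c + q ^ m * g (k * (2 * n' + 2)) q * b)
  end.

Fixpoint D (n : nat) (q : R) : R :=
  match n with O => 1 | S n' => D n' q * g (2 * n' + 1) q end.

Lemma one_minus_pow q k j : 1 - (q ^ k) ^ j = (1 - q) * g (k * j) q.
Proof. rewrite g_geom, pow_mult. reflexivity. Qed.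

Lemma SS_PE m k n q : 0 < q -> q <> 1 -> (1 <= k)%nat ->
  SS (q ^ k) (2 * n) (q ^ m) = (1 - q) ^ n * fst (PE m k n q) /\
  SS (q ^ k) (2 * n + 1) (q ^ m) = (1 - q) ^ (n + 1) * snd (PE m k n q).
Proof.
  intros H0 H1 Hk.
  assert (Hp0 : 0 < q ^ k) by (apply pow_lt; auto).
  assert (Hp1 : q ^ k <> 1) by (apply pow_ne1; auto).
  induction n as [|n [IH1 IH2]].
  - simpl. unfold SS, F. simpl. rewrite !cc0 by auto.
    rewrite (cc_le _ 1 1) by lia. rewrite qbinom_diag by auto.
    split; [ring|]. replace ((1-q)*1*g m q) with ((1-q)*g m q) by ring. rewrite g_geom. ring.
  - assert (E1 : SS (q ^ k) (2 * S n) (q ^ m) = (1 - q) ^ S n * fst (PE m k (S n) q)).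
    { replace (2 * S n)%nat with (S (S (2 * n)))%nat by lia.
      rewrite SS_rec by auto. replace (S (2 * n)) with (2 * n + 1)%nat by lia.
      rewrite IH1, IH2, one_minus_pow. simpl fst.
      replace (n+1)%nat with (S n) by lia. simpl. ring. }
    split; auto.
    replace (2 * S n + 1)%nat with (S (S (2 * n + 1)))%nat by lia.
    rewrite SS_rec by auto. replace (S (2 * n + 1)) with (2 * S n)%nat by lia.
    rewrite E1, IH2, one_minus_pow.
    replace (k * (2 * S n))%nat with (k * (2 * n + 2))%nat by lia.
    rewrite <- (g_geom m q).
    replace (S n + 1)%nat with (S (S n)) by lia. replace (n+1)%nat with (S n) by lia.
    simpl fst; simpl snd. simpl pow. replace (n + (n+0) + 2)%nat with (2*n+2)%nat by lia. ring.
Qed.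

Lemma qpoch_D n q : qpoch q (q ^ 2) n = (1 - q) ^ n * D n q.
Proof.
  induction n. simpl; ring.
  change (qpoch q (q^2) (S n)) with (qpoch q (q^2) n * (1 - (q^2)^n * q)).
  change (D (S n) q) with (D n q * g (2*n+1) q).
  rewrite IHn. replace ((q ^ 2) ^ n * q) with (q ^ (2 * n + 1)).
  rewrite <- g_geom. rewrite <- tech_pow_Rmult. ring.
  rewrite <- pow_mult, pow_add. ring.
Qed.

Lemma D_pos n q : 0 < q -> 0 < D n q.
Proof.
  intros. induction n. simpl. lra. change (D (S n) q) with (D n q * g (2*n+1) q). apply Rmult_lt_0_compat; auto.
  replace (2 * n + 1)%nat with (S (2 * n)) by lia. apply g_posS; auto.
Qed.

Lemma altsum_SS m k N q : 0 < q -> q <> 1 -> (1 <= k)%nat ->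
  altsum m k N q = SS (q ^ k) N (q ^ m).
Proof.
  intros. unfold altsum, SS, F. apply sum_eq. intros i Hi.
  rewrite cc_le by lia. rewrite pow_mult. reflexivity.
Qed.

Lemma PE_one m k n :
  PE m k n 1 = (INR k ^ n * D n 1, INR m * INR k ^ n * D (S n) 1).
Proof.
  induction n.
  - simpl. rewrite g_one. simpl. f_equal; ring.
  - simpl PE. rewrite IHn. simpl fst; simpl snd. rewrite !g_one, !pow1.
    change (D (S (S n)) 1) with (D (S n) 1 * g (2*(S n)+1) 1).
    change (D (S n) 1) with (D n 1 * g (2*n+1) 1).
    rewrite !g_one. rewrite !mult_INR, !plus_INR, !S_INR, !INR_0.
    replace (INR (2*n)) with (INR n + INR n) by (rewrite mult_INR; change (INR 2) with (1+1); ring). replace (INR (2*S n)) with (INR n + INR n + 2) by (rewrite mult_INR, (S_INR n); change (INR 2) with (1+1); ring). rewrite <- !tech_pow_Rmult. f_equal; ring.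
Qed.

Lemma PE_cont m k n :
  continuity_pt (fun q => fst (PE m k n q)) 1 /\ continuity_pt (fun q => snd (PE m k n q)) 1.
Proof.
  induction n as [|n [C1 C2]].
  - simpl. split. apply continuity_pt_const. intros a b. reflexivity. apply g_cont.
  - assert (Cc : continuity_pt (fun q => fst (PE m k (S n) q)) 1).
    { simpl.
      apply (continuity_pt_plus (fun q => (1 - q ^ m) * snd (PE m k n q))
               (fun q => q ^ m * g (k * (2 * n + 1)) q * fst (PE m k n q))).
      - apply (continuity_pt_mult (fun q => 1 - q ^ m) (fun q => snd (PE m k n q))); auto.
        apply (continuity_pt_minus (fun _ => 1) (fun q => q ^ m)).
        apply continuity_pt_const; intros a b; reflexivity. apply pow_cont.
      - apply (continuity_pt_mult (fun q => q ^ m * g (k * (2 * n + 1)) q) (fun q => fst (PE m k n q))); auto.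
        apply (continuity_pt_mult (fun q => q ^ m) (g (k * (2 * n + 1)))).
        apply pow_cont. apply g_cont. }
    split; auto.
    simpl. simpl in Cc.
    apply (continuity_pt_plus (fun q => g m q * fst (PE m k (S n) q))
             (fun q => q ^ m * g (k * (2 * n + 2)) q * snd (PE m k n q))).
    + apply (continuity_pt_mult (g m) (fun q => fst (PE m k (S n) q))). apply g_cont. exact Cc.
    + apply (continuity_pt_mult (fun q => q ^ m * g (k * (2 * n + 2)) q) (fun q => snd (PE m k n q))); auto.
      apply (continuity_pt_mult (fun q => q ^ m) (g (k * (2 * n + 2)))).
      apply pow_cont. apply g_cont.
Qed.

Lemma D_cont n : continuity_pt (D n) 1.
Proof.
  induction n; simpl D.
  - apply continuity_pt_const; intros a b; reflexivity.
  - apply (continuity_pt_mult (D n) (g (2 * n + 1))); auto. apply g_cont.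
Qed.

Lemma lim_from_cont (f h : R -> R) (l : R) :
  continuity_pt h 1 -> h 1 = l -> (forall q, 0 < q -> q <> 1 -> f q = h q) ->
  limit1_in f (fun q => q <> 1) l 1.
Proof.
  intros Hc Hl Hf eps Heps. destruct (Hc eps Heps) as [alp [Ha Hx]].
  exists (Rmin alp (1/2)). split. apply Rmin_pos; lra.
  intros x [Hx1 Hd]. simpl in Hd. unfold R_dist in Hd.
  pose proof (Rmin_l alp (1/2)). pose proof (Rmin_r alp (1/2)).
  assert (0 < x) by (apply Rabs_def2 in Hd; lra).
  rewrite Hf by auto. rewrite <- Hl. apply Hx. split.
  split. constructor. auto. simpl. unfold R_dist. lra.
Qed.

Theorem theorem2p2 (m k n : nat) (hk : (1 <= k)%nat) :
  limit1_in (fun q => altsum m k (2 * n) q / qpoch q (q ^ 2) n)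
            (fun q => q <> 1) (INR k ^ n) 1
  /\
  limit1_in (fun q => altsum m k (2 * n + 1) q / qpoch q (q ^ 2) (n + 1))
            (fun q => q <> 1) (INR m * INR k ^ n) 1.
Proof.
  destruct (PE_cont m k n) as [C1 C2].
  pose proof (D_pos n 1 ltac:(lra)). pose proof (D_pos (S n) 1 ltac:(lra)).
  split.
  - apply (lim_from_cont _ (fun q => fst (PE m k n q) / D n q)).
    + apply (continuity_pt_div (fun q => fst (PE m k n q)) (D n)); auto.
      apply D_cont. lra.
    + rewrite PE_one. simpl fst. field. lra.
    + intros q Hq0 Hq1. rewrite altsum_SS by auto.
      destruct (SS_PE m k n q Hq0 Hq1 hk) as [E _]. rewrite E, qpoch_D.
      pose proof (D_pos n q Hq0).
      assert ((1 - q) ^ n <> 0) by (apply pow_nonzero; lra).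
      field. split; lra.
  - apply (lim_from_cont _ (fun q => snd (PE m k n q) / D (S n) q)).
    + apply (continuity_pt_div (fun q => snd (PE m k n q)) (D (S n))); auto.
      apply D_cont. lra.
    + rewrite PE_one. cbv [snd]. field. lra.
    + intros q Hq0 Hq1. rewrite altsum_SS by auto.
      destruct (SS_PE m k n q Hq0 Hq1 hk) as [_ E]. rewrite E, qpoch_D.
      replace (n + 1)%nat with (S n) by lia.
      pose proof (D_pos (S n) q Hq0).
      assert ((1 - q) ^ S n <> 0) by (apply pow_nonzero; lra).
      field. split; lra.
Qed.
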